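(* Let $\psi_1,\dots,\psi_L\in\mathbb R^n$ and define $\beta_\ell=n^{-1}\sum_{i=1}^n\nabla f(X_i)\psi_{\ell,i}$ for $\ell=1,\dots,L$. If $\operatorname{span}\{\psi_1,\dots,\psi_L\}=\mathbb R^n$, then there exist vectors $\bar\beta_1,\dots,\bar\beta_{m^*}\in\mathcal B^*=\{\sum_{\ell=1}^Lc_\ell\beta_\ell:\sum_{\ell}|c_\ell|\le1\}$ and constants $\mu_1,\dots,\mu_{m^*}$ (possibly depending on $n$) such that $\Pi^*\preceq\sum_{k=1}^{m^*}\mu_k\bar\beta_k\bar\beta_k^\top$.
   Context: Let $X_1,\dots,X_n\in\mathbb R^d$ and $f(x)=g(\vartheta_1^\top x,\dots,\vartheta_{m^*}^\top x)$ with $g:\mathbb R^{m^*}\to\mathbb R$ differentiable and $\vartheta_1,\dots,\vartheta_{m^*}$ orthonormal in $\mathbb R^d$. The subspace $\mathcal S=\operatorname{span}\{\nabla f(X_1),\dots,\nabla f(X_n)\}$ is assumed to have dimension $m^*$ (i.e. it coincides with the EDR subspace spanned by $\vartheta_1,\dots,\vartheta_{m^*}$), and $\Pi^*$ denotes the orthogonal projector onto $\mathcal S$. $\psi_{\ell,i}$ is the $i$th coordinate of $\psi_\ell$. $A\preceq B$ means $B-A$ is positive semidefinite. *)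

(* Defs.v *)
From HB Require Import structures.
From mathcomp Require Import all_boot all_order all_algebra.
From mathcomp Require Import all_classical all_reals all_analysis.
Set Implicit Arguments. Unset Strict Implicit. Unset Printing Implicit Defensive.
Import Order.TTheory GRing.Theory Num.Theory.
Import numFieldNormedType.Exports.
Local Open Scope ring_scope.

Definition grad (R : realType) (d : nat) (f : 'rV[R]_d -> R) (x : 'rV[R]_d)
  : 'rV[R]_d := \row_(j < d) ('D_(delta_mx 0 j) f x).

Definition psd (R : realType) (d : nat) (M : 'M[R]_d) : Prop :=
  M^T = M /\ forall v : 'rV[R]_d, 0 <= (v *m M *m v^T) 0 0.

Definition loewner_le (R : realType) (d : nat) (A B : 'M[R]_d) : Prop :=
  psd (B - A).

Definition orth_proj_onto (R : realType) (n d : nat) (P : 'M[R]_d)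
  (G : 'M[R]_(n, d)) : Prop :=
  P^T = P /\ P *m P = P /\ (P == G)%MS.

Definition beta (R : realType) (n d L : nat) (f : 'rV[R]_d -> R)
  (X : 'I_n -> 'rV[R]_d) (psi : 'I_L -> 'rV[R]_n) (l : 'I_L) : 'rV[R]_d :=
  n%:R^-1 *: \sum_(i < n) (psi l 0 i *: grad f (X i)).

Definition Bstar (R : realType) (d L : nat) (beta : 'I_L -> 'rV[R]_d)
  (v : 'rV[R]_d) : Prop :=
  exists c : 'I_L -> R, \sum_(l < L) `|c l| <= 1 /\
                        v = \sum_(l < L) c l *: beta l.

(* Main.v *)
Require Import Defs.
From HB Require Import structures.
From mathcomp Require Import all_boot all_order all_algebra.
From mathcomp Require Import all_classical all_reals all_analysis.
From mathcomp Require Import ring lra.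
Import Order.TTheory GRing.Theory Num.Theory.
Import numFieldNormedType.Exports.
Local Open Scope ring_scope.

Lemma quad_bound (R : realType) (m : nat) (M : 'M[R]_m) (w : 'rV[R]_m) :
  (w *m M *m w^T) 0 0 <= \sum_(k < m) (\sum_(j < m) (`|M k j| + `|M j k|)) * w 0 k ^+ 2.
Proof.
have -> : (w *m M *m w^T) 0 0 = \sum_k \sum_j w 0 k * M k j * w 0 j.
  rewrite !mxE; under eq_bigr => j _ do rewrite !mxE big_distrl /=.
  by rewrite exchange_big.
have -> : \sum_(k < m) (\sum_(j < m) (`|M k j| + `|M j k|)) * w 0 k ^+ 2
   = \sum_k \sum_j `|M k j| * (w 0 k ^+ 2 + w 0 j ^+ 2).
  transitivity (\sum_(k < m) (\sum_(j < m) `|M k j| * w 0 k ^+ 2 + \sum_(j < m) `|M j k| * w 0 k ^+ 2)).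
    by apply: eq_bigr => k _; rewrite big_distrl -big_split /=; apply: eq_bigr => j _; rewrite mulrDl.
  rewrite big_split /= [X in _ + X]exchange_big /= -big_split /=.
  by apply: eq_bigr => k _; rewrite -big_split /=; apply: eq_bigr => j _; rewrite mulrDr.
apply: ler_sum => k _; apply: ler_sum => j _.
set a := M k j; set p := w 0 k; set q := w 0 j.
have h1 : a <= `|a| := ler_norm a.
have h2 : - a <= `|a| by rewrite -normrN ler_norm.
have ha : 0 <= `|a| := normr_ge0 a.
have s1 : 0 <= (p + q) ^+ 2 := sqr_ge0 _.
have s2 : 0 <= (p - q) ^+ 2 := sqr_ge0 _.
have e1 : 0 <= (`|a| - a) * (p + q) ^+ 2 by apply: mulr_ge0 => //; rewrite subr_ge0.
have e2 : 0 <= (`|a| + a) * (p - q) ^+ 2 by apply: mulr_ge0 => //; lra.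
have e3 : 0 <= `|a| * (p ^+ 2 + q ^+ 2) by apply: mulr_ge0 => //; apply: addr_ge0; apply: sqr_ge0.
nra.
Qed.

Theorem lemma1 (R : realType) (n d m L : nat)
  (X : 'I_n -> 'rV[R]_d)
  (g : 'rV[R]_m -> R) (Theta : 'M[R]_(d, m)) (f : 'rV[R]_d -> R)
  (hg : forall y : 'rV[R]_m, differentiable g y)
  (hTheta : Theta^T *m Theta = 1%:M)
  (hf : f = fun x => g (x *m Theta))
  (hrank : \rank (\matrix_(i < n) grad f (X i)) = m)
  (P : 'M[R]_d)
  (hP : orth_proj_onto P (\matrix_(i < n) grad f (X i)))
  (psi : 'I_L -> 'rV[R]_n)
  (hspan : row_full (\matrix_(l < L) psi l)) :
  exists bbar : 'I_m -> 'rV[R]_d,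
    (forall k, Bstar (beta f X psi) (bbar k)) /\
    exists mu : 'I_m -> R,
      loewner_le P (\sum_(k < m) mu k *: ((bbar k)^T *m bbar k)).
Proof.
set G := \matrix_(i < n) grad f (X i) in hrank hP.
set Psi := \matrix_(l < L) psi l in hspan.
set Bt := \matrix_(l < L) beta f X psi l.
have hBt : Bt = n%:R^-1 *: (Psi *m G).
  apply/matrixP => l j; rewrite !mxE /beta summxE; congr (_ * _).
  by apply: eq_bigr => i _; rewrite !mxE.
have [hGB hrkB] : (G <= Bt)%MS /\ \rank Bt = m.
  have [n0|hn] := eqVneq n 0%N.
    have G0 : G = 0.
      apply/eqP; rewrite -mxrank_eq0 -leqn0; exact: leq_trans (rank_leq_row G) (eq_leq n0).
    have B0 : Bt = 0.
      rewrite hBt; have -> : n%:R^-1 = 0 :> R by rewrite n0 invr0.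
      by rewrite scale0r.
    by rewrite G0 B0 sub0mx -hrank G0 !mxrank0.
  have hn' : n%:R^-1 != 0 :> R by rewrite invr_eq0 pnatr_eq0.
  have eBt : (Bt :=: G)%MS.
    rewrite hBt; exact: eqmx_trans (eqmx_scale _ hn') (eqmxMfull _ hspan).
  split; first by rewrite eBt.
  by rewrite -hrank; apply/eqmx_rank/eqmxP.
have [h hh] : exists h : 'I_m -> 'I_L, (Bt <= rowsub h Bt)%MS.
  rewrite -hrkB; exists (maxrankfun Bt); by rewrite eq_maxrowsub.
set B := rowsub h Bt.
exists (fun k => row k B); split.
  move=> k; exists (fun l => (l == h k)%:R); split.
    rewrite (bigD1 (h k)) //= big1 => [|l /negbTE ->]; last by rewrite normr0.
    by rewrite eqxx normr1 addr0.
  rewrite row_rowsub rowK (bigD1 (h k)) //= eqxx scale1r big1 ?addr0 //.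
  by move=> l /negbTE ->; rewrite scale0r.
case: hP => hPt [hPP hPG].
have hPB : (P <= B)%MS.
  apply: submx_trans hh; apply: submx_trans hGB.
  by case/andP: hPG.
set A := P *m pinvmx B.
set M := A^T *m A.
have hAB : A *m B = P by rewrite mulmxKpV.
have hPeq : P = B^T *m M *m B.
  rewrite -{1}hPP -{1}hPt -hAB trmx_mul /M !mulmxA.
  done.
exists (fun k => \sum_j (`|M k j| + `|M j k|)).
split.
  rewrite raddfB /= hPt; congr (_ - _).
  rewrite raddf_sum /=; apply: eq_bigr => k _.
  by rewrite linearZ /= trmx_mul trmxK.
move=> v.
rewrite mulmxBr mulmxBl mxE [X in _ + X]mxE subr_ge0.
have -> : v *m P *m v^T = (v *m B^T) *m M *m (v *m B^T)^T.
  by rewrite {1}hPeq trmx_mul trmxK !mulmxA.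
have hq := @quad_bound _ _ M (v *m B^T).
apply: le_trans hq _.
rewrite le_eqVlt; apply/orP; left; apply/eqP.
rewrite mulmx_sumr mulmx_suml summxE; apply: eq_bigr => k _.
rewrite -scalemxAr -scalemxAl [RHS]mxE; congr (_ * _).
have e : v *m ((row k B)^T *m row k B) *m v^T
    = (v *m (row k B)^T) *m (v *m (row k B)^T)^T by rewrite trmx_mul trmxK !mulmxA.
have e2 : (v *m (row k B)^T) 0 0 = (v *m B^T) 0 k.
  by rewrite !mxE; apply: eq_bigr => j _; rewrite !mxE.
rewrite e [RHS]mxE big_ord1 [X in _ * X]mxE e2 expr2 //.
Qed.
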